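(* Let $G$ be the lattice $\mathbb Z$, unweighted, with $\mu\equiv1$. Let $x_0\in\mathbb Z$, $r\in\mathbb N$, and let $u:[0,\infty)\times\mathbb Z\to(0,\infty)$, $C^1$ in $t$, satisfy $\partial_tu=\Delta u$ on $[0,\infty)\times\bar B_{2r}(x_0)$. Then there is an absolute constant $C>0$ (independent of $x_0$, $r$, $u$) such that $$\partial_t(\log u)\ge\Psi_\Upsilon(\log u)-\varphi(t)-\frac Cr\quad\text{on }(0,\infty)\times\bar B_r(x_0),$$ where $\varphi$ is the relaxation function of the CD-function $F(a)=2e^{-a/2}\big(\Upsilon(a)+\Upsilon(-a)\big)$.
   Context: $\Delta u(x)=u(x+1)-2u(x)+u(x-1)$; $\Psi_H(v)(x)=\sum_{y\in\{x\pm1\}}H(v(y)-v(x))$; $\Upsilon(z)=e^z-1-z$; $\bar B_\rho(x_0)=\{y\in\mathbb Z:|y-x_0|\le\rho\}$. The relaxation function of a CD-function $F$ (continuous $F:[0,\infty)\to[0,\infty)$, $F(0)=0$, $F(x)/x$ strictly increasing, $\int_1^\infty dr/F<\infty$) is the unique positive solution $\varphi$ of $\dot\varphi+F(\varphi)=0$ on $(0,\infty)$ with $\varphi(0+)=\infty$. *)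

(* Defs.v *)
From Stdlib Require Export Reals ZArith.
Open Scope R_scope.

Definition Ups (z : R) : R := exp z - 1 - z.

Definition Psi (H : R -> R) (v : Z -> R) (x : Z) : R :=
  H (v (x + 1)%Z - v x) + H (v (x - 1)%Z - v x).

Definition lap (v : Z -> R) (x : Z) : R := v (x + 1)%Z - 2 * v x + v (x - 1)%Z.

Definition in_ball (x0 : Z) (rho : nat) (x : Z) : Prop :=
  (Z.abs (x - x0) <= Z.of_nat rho)%Z.

Definition F57 (a : R) : R := 2 * exp (- a / 2) * (Ups a + Ups (- a)).

Definition relaxation_function (F : R -> R) (phi : R -> R) : Prop :=
  (forall t, 0 < t -> 0 < phi t) /\
  (forall t, 0 < t -> derivable_pt_lim phi t (- F (phi t))) /\
  (forall M, exists delta, 0 < delta /\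
     forall t, 0 < t < delta -> M < phi t).

Definition C1_nonneg (f df : R -> R) : Prop :=
  (forall t, 0 < t -> derivable_pt_lim f t (df t)) /\
  (forall eps, 0 < eps -> exists delta, 0 < delta /\
     forall h, 0 < h < delta -> Rabs ((f h - f 0) / h - df 0) < eps) /\
  (forall t, 0 <= t -> forall eps, 0 < eps -> exists delta, 0 < delta /\
     forall s, 0 <= s -> Rabs (s - t) < delta -> Rabs (df s - df t) < eps).

(* Main.v *)
Require Import Defs.
From Stdlib Require Import Reals ZArith.
From Stdlib Require Import Lra Psatz Classical.
Open Scope R_scope.

Lemma deriv_cont (h : R -> R) T l : derivable_pt_lim h T l ->
  forall eps, 0 < eps -> exists del, 0 < del /\ forall k, Rabs k < del -> Rabs (h (T+k) - h T) < eps.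
Proof.
  intros Hd eps He.
  destruct (Hd 1 Rlt_0_1) as [d0 Hd0].
  assert (Hp : 0 < Rabs l + 1) by (pose proof (Rabs_pos l); lra).
  exists (Rmin d0 (eps / (Rabs l + 1))). split.
  { apply Rmin_pos. apply cond_pos. apply Rdiv_lt_0_compat; lra. }
  intros k Hk.
  destruct (Req_dec k 0) as [->|Hk0].
  { rewrite Rplus_0_r, Rminus_diag, Rabs_R0; lra. }
  pose proof (Rmin_l d0 (eps / (Rabs l + 1))) as m1.
  pose proof (Rmin_r d0 (eps / (Rabs l + 1))) as m2.
  specialize (Hd0 k Hk0 ltac:(lra)).
  assert (Hq : Rabs ((h (T + k) - h T) / k) < Rabs l + 1).
  { pose proof (Rabs_triang_inv ((h (T + k) - h T) / k) l). lra. }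
  replace (h (T + k) - h T) with (k * ((h (T + k) - h T) / k)) by (field; auto).
  rewrite Rabs_mult.
  assert (Hk' : Rabs k < eps / (Rabs l + 1)) by lra.
  apply Rlt_le_trans with (Rabs k * (Rabs l + 1)).
  - apply Rmult_lt_compat_l; auto. apply Rabs_pos_lt; auto.
  - apply Rmult_lt_compat_r with (r := Rabs l + 1) in Hk'; auto.
    unfold Rdiv in Hk'. rewrite Rmult_assoc, Rinv_l in Hk'; lra.
Qed.

Lemma comparison (h h' : R -> R) (d : R) :
  0 < d -> (forall t, 0 < t -> derivable_pt_lim h t (h' t)) ->
  (forall t, 0 < t < d -> h t < 0) ->
  (forall t, 0 < t -> h t = 0 -> h' t < 0) ->
  forall t1, 0 < t1 -> h t1 < 0.
Proof.
  intros Hd Hder Hsmall Hzero t1 Ht1.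
  destruct (Rlt_or_le (h t1) 0) as [H|H]; [exact H|exfalso].
  set (a0 := d / 2).
  assert (Ha0 : 0 < a0 < d) by (unfold a0; lra).
  assert (Ha0t1 : a0 <= t1).
  { destruct (Rle_or_lt a0 t1); auto.
    destruct (Rlt_or_le t1 d). specialize (Hsmall t1 ltac:(lra)); lra. lra. }
  set (E := fun t => a0 <= t <= t1 /\ forall s, a0 <= s <= t -> h s < 0).
  assert (HB : bound E) by (exists t1; intros x [Hx _]; lra).
  assert (HE : exists x, E x).
  { exists a0. split. lra. intros s Hs. replace s with a0 by lra. apply Hsmall; lra. }
  destruct (completeness E HB HE) as [T [HTub HTl]].
  assert (Ha0T : a0 <= T) by (apply HTub; destruct HE; unfold E; split; [lra|]; intros s Hs; replace s with a0 by lra; apply Hsmall; lra).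
  assert (HTt1 : T <= t1) by (apply HTl; intros x [Hx _]; lra).
  assert (F1 : forall s, a0 <= s < T -> h s < 0).
  { intros s Hs.
    destruct (classic (exists t, E t /\ s < t)) as [[t [[_ Et] Hst]]|Hn].
    - apply Et; lra.
    - assert (T <= s). { apply HTl. intros x Ex. destruct (Rle_or_lt x s); auto. exfalso; apply Hn; eauto. }
      lra. }
  assert (HT0 : 0 < T) by lra.
  pose proof (Hder T HT0) as HdT.
  destruct (Rtotal_order (h T) 0) as [Hlt|[Heq|Hgt]].
  -
    destruct (Req_dec T t1) as [->|HTne]; [lra|].
    destruct (deriv_cont h T (h' T) HdT (- h T) ltac:(lra)) as [del [Hdel Hc]].
    set (k := Rmin (del/2) (t1 - T)).
    assert (Hk : 0 < k) by (apply Rmin_pos; lra).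
    assert (Hk1 : k <= del/2) by apply Rmin_l.
    assert (Hk2 : k <= t1 - T) by apply Rmin_r.
    assert (E (T + k)).
    { split. lra. intros s Hs.
      destruct (Rlt_or_le s T). apply F1; lra.
      specialize (Hc (s - T)). replace (T + (s - T)) with s in Hc by ring.
      assert (Rabs (s - T) < del) by (rewrite Rabs_right; lra).
      specialize (Hc H1). pose proof (Rle_abs (h s - h T)). lra. }
    specialize (HTub _ H0). lra.
  - assert (HTa : a0 < T).
    { destruct (Req_dec T a0) as [e|]; [|lra]. rewrite e in Heq. specialize (Hsmall a0 Ha0); lra. }
    specialize (Hzero T HT0 Heq).
    destruct (HdT (- h' T / 2) ltac:(lra)) as [del Hdel].
    set (m := Rmin (del/2) ((T - a0)/2)).
    assert (Hm : 0 < m) by (apply Rmin_pos; [pose proof (cond_pos del)|]; lra).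
    assert (Hm1 : m <= del/2) by apply Rmin_l.
    assert (Hm2 : m <= (T-a0)/2) by apply Rmin_r.
    specialize (Hdel (- m) ltac:(lra)).
    assert (Rabs (- m) < del) by (rewrite Rabs_Ropp, Rabs_right; pose proof (cond_pos del); lra).
    specialize (Hdel H0).
    rewrite Heq in Hdel.
    pose proof (Rle_abs ((h (T + - m) - 0) / - m - h' T)).
    assert (Hq : (h (T + - m) - 0) / - m < h' T / 2) by lra.
    assert (h (T + - m) > 0).
    { replace (h (T + - m)) with (((h (T + - m) - 0) / - m) * (- m)) by (field; lra).
      apply Rmult_lt_reg_r with (/ m). apply Rinv_0_lt_compat; lra.
      rewrite Rmult_0_l. replace ((h (T + - m) - 0) / - m * - m * / m) with (- ((h (T + - m) - 0) / - m)) by (field; lra). lra. }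
    specialize (F1 (T + - m) ltac:(lra)). lra.
  - assert (HTa : a0 < T).
    { destruct (Req_dec T a0) as [e|]; [|lra]. rewrite e in Hgt. specialize (Hsmall a0 Ha0); lra. }
    destruct (deriv_cont h T (h' T) HdT (h T) ltac:(lra)) as [del [Hdel Hc]].
    set (m := Rmin (del/2) ((T - a0)/2)).
    assert (Hm : 0 < m) by (apply Rmin_pos; lra).
    assert (Hm1 : m <= del/2) by apply Rmin_l.
    assert (Hm2 : m <= (T-a0)/2) by apply Rmin_r.
    specialize (Hc (- m)). assert (Rabs (- m) < del) by (rewrite Rabs_Ropp, Rabs_right; lra).
    specialize (Hc H0). pose proof (Rle_abs (- (h (T + - m) - h T))). rewrite Rabs_Ropp in H1.
    specialize (F1 (T + - m) ltac:(lra)). lra.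
Qed.
Lemma key (a b w p r0 : R) : 0 < a -> 0 < b -> 0 < w < 1 -> 1 < p -> 0 <= r0 <= 1 ->
  p*p + r0 >= 2 -> a*b*(p*p) = w*w ->
  2*a + 2*b - r0*(w*w)*a - /a - r0*(w*w)*b - /b < - (2*w*(/(w*w) + w*w - 2)).
Proof.
  intros Ha Hb Hw Hp Hr Hpr Hab.
  assert (E1 : /a + /b = (a+b)*(p*p)/(w*w)).
  { rewrite <- Hab. field. lra. }
  set (K := 2 - r0*(w*w) - (p*p)/(w*w)).
  assert (HK : K < 0).
  { unfold K. assert (Hx : 0 < w*w < 1) by nra.
    assert (Hq : (2 - r0*(w*w) - p*p/(w*w))*(w*w) < 0).
    { replace ((2 - r0*(w*w) - p*p/(w*w))*(w*w)) with (2*(w*w) - r0*(w*w)*(w*w) - p*p) by (field; lra).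
      assert ((1 - w*w)*(2 - r0*(1+w*w)) > 0) by (apply Rmult_lt_0_compat; nra). nra. }
    destruct (Rlt_or_le (2 - r0*(w*w) - p*p/(w*w)) 0); auto. nra. }
  replace (2*a + 2*b - r0*(w*w)*a - /a - r0*(w*w)*b - /b) with ((a+b)*K) by (unfold K; replace (2*a + 2*b - r0*(w*w)*a - /a - r0*(w*w)*b - /b) with (2*a + 2*b - r0*(w*w)*(a+b) - (/a + /b)) by ring; rewrite E1; field; lra).
  assert (Hs : a + b >= 2*w/p).
  { assert ((a+b)*(a+b) >= (2*w/p)*(2*w/p)).
    { replace ((2*w/p)*(2*w/p)) with (4*(a*b)) by (assert (Hab2 : a*b = w*w/(p*p)) by (rewrite <- Hab; field; lra); rewrite Hab2; field; lra). pose proof (Rle_0_sqr (a-b)); unfold Rsqr in *; lra. }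
    assert (0 < 2*w/p) by (apply Rdiv_lt_0_compat; lra). nra. }
  apply Rle_lt_trans with ((2*w/p)*K). nra.
  unfold K.
  replace ((2*w/p)*(2 - r0*(w*w) - (p*p)/(w*w))) with (2*(2*(w*w) - r0*(w*w)*(w*w) - p*p)/(w*p)) by (field; lra).
  replace (- (2*w*(/(w*w) + w*w - 2))) with (-(2*p*(1 + (w*w)*(w*w) - 2*(w*w)))/(w*p)) by (field; lra).
  apply Rmult_lt_compat_r. apply Rinv_0_lt_compat; nra.
  set (x := w*w). assert (0 < x < 1) by (unfold x; nra).
  assert (G : p*p - p + 2*p*x - 2*x + r0*x*x - p*x*x > 0).
  { assert (E : p*p - p + 2*p*x - 2*x + r0*x*x - p*x*x = (1-x)*(p*p-p) + x*(p*p+r0-2) + x*(1-x)*(p-r0)) by ring.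
    rewrite E. assert ((1-x)*(p*p-p) > 0) by (apply Rmult_lt_0_compat; nra). assert (x*(p*p+r0-2) >= 0) by nra.
    assert (x*(1-x)*(p-r0) >= 0) by (apply Rle_ge; apply Rmult_le_pos; nra). lra. }
  nra.
Qed.

Definition sfun (u : R -> Z -> R) (t : R) (y : Z) : R :=
  - (ln (u t (y+1)%Z) - 2 * ln (u t y) + ln (u t (y-1)%Z)).

Lemma dlim_ext (f g : R -> R) x l : (forall t, f t = g t) -> derivable_pt_lim f x l -> derivable_pt_lim g x l.
Proof. intros E H eps He. destruct (H eps He) as [d Hd]. exists d. intros h H1 H2. rewrite <- !E. auto. Qed.

Lemma exp_comb A B C : 0 < A -> 0 < B -> 0 < C -> exp (ln A - 2 * ln B + ln C) = A * C / (B * B).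
Proof.
  intros HA HB HC.
  replace (ln A - 2 * ln B + ln C) with (ln (A * C / (B * B))).
  - apply exp_ln. apply Rdiv_lt_0_compat; nra.
  - unfold Rdiv. assert (0 < B*B) by nra.
    rewrite (ln_mult (A*C) (/(B*B))) by (try apply Rinv_0_lt_compat; nra).
    rewrite (ln_mult A C) by nra. rewrite ln_Rinv by nra. rewrite ln_mult by nra. ring.
Qed.

Lemma near0 (v dv : R -> R) : C1_nonneg v dv -> 0 < v 0 ->
  exists d, 0 < d /\ forall t, 0 < t < d -> v 0 / 2 < v t < 2 * v 0.
Proof.
  intros [_ [H0 _]] Hv.
  destruct (H0 1 Rlt_0_1) as [d [Hd Hh]].
  assert (Hp : 0 < Rabs (dv 0) + 1) by (pose proof (Rabs_pos (dv 0)); lra).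
  exists (Rmin d (v 0 / (2 * (Rabs (dv 0) + 1)))). split.
  { apply Rmin_pos; auto. apply Rdiv_lt_0_compat; lra. }
  intros t [Ht1 Ht2].
  pose proof (Rmin_l d (v 0 / (2 * (Rabs (dv 0) + 1)))).
  pose proof (Rmin_r d (v 0 / (2 * (Rabs (dv 0) + 1)))).
  specialize (Hh t ltac:(lra)).
  assert (Hq : Rabs ((v t - v 0) / t) < Rabs (dv 0) + 1).
  { pose proof (Rabs_triang_inv ((v t - v 0) / t) (dv 0)). lra. }
  assert (Ht3 : t * (2 * (Rabs (dv 0) + 1)) < v 0).
  { assert (Hlt : t < v 0 / (2 * (Rabs (dv 0) + 1))) by lra.
    apply Rmult_lt_compat_r with (r := 2 * (Rabs (dv 0) + 1)) in Hlt; [|lra].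
    replace (v 0 / (2 * (Rabs (dv 0) + 1)) * (2 * (Rabs (dv 0) + 1))) with (v 0) in Hlt by (field; lra). lra. }
  assert (Habs : Rabs (v t - v 0) < v 0 / 2).
  { replace (v t - v 0) with (t * ((v t - v 0) / t)) by (field; lra).
    rewrite Rabs_mult, (Rabs_right t) by lra.
    apply Rle_lt_trans with (t * (Rabs (dv 0) + 1)).
    - apply Rmult_le_compat_l; lra.
    - lra. }
  pose proof (Rle_abs (v t - v 0)) as Ra. pose proof (Rle_abs (-(v t - v 0))) as Rb. rewrite Rabs_Ropp in Rb. lra.
Qed.

Lemma dlog (u du : R -> Z -> R) k t : 0 < u t k -> derivable_pt_lim (fun s => u s k) t (du t k) ->
  derivable_pt_lim (fun s => ln (u s k)) t (du t k / u t k).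
Proof.
  intros Hp Hd.
  pose proof (derivable_pt_lim_comp (fun s => u s k) ln t (du t k) (/ u t k) Hd (derivable_pt_lim_ln _ Hp)) as H.
  replace (du t k / u t k) with (/ u t k * du t k) by (field; lra). exact H.
Qed.

Lemma core (phi : R -> R) (Hphi : relaxation_function F57 phi) (u du : R -> Z -> R)
  (Hpos : forall t x, 0 <= t -> 0 < u t x)
  (HC1 : forall x, C1_nonneg (fun t => u t x) (fun t => du t x)) (y : Z)
  (Heq : forall t, 0 < t -> du t y = lap (u t) y /\ du t (y+1)%Z = lap (u t) (y+1)%Z /\ du t (y-1)%Z = lap (u t) (y-1)%Z)
  (eps r0 : R) (He : 0 < eps) (Hr : 0 <= r0 <= 1) (Hp : exp eps + r0 >= 2)
  (Hn1 : forall t, 0 < t -> r0 * exp (- phi t) * (u t (y+1)%Z * u t (y+1)%Z) <= u t (y+1+1)%Z * u t y)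
  (Hn2 : forall t, 0 < t -> r0 * exp (- phi t) * (u t (y-1)%Z * u t (y-1)%Z) <= u t (y-1-1)%Z * u t y) :
  forall t, 0 < t -> sfun u t y < phi t + eps.
Proof.
  destruct Hphi as [Hphipos [Hphid Hphi0]].
  set (sd := fun t => - (du t (y+1)%Z / u t (y+1)%Z - 2 * (du t y / u t y) + du t (y-1)%Z / u t (y-1)%Z)).
  set (h := fun t => sfun u t y - (phi t + eps)).
  set (h' := fun t => sd t - (- F57 (phi t) + 0)).
  intros t Ht.
  cut (h t < 0). { unfold h. lra. }
  destruct (near0 _ _ (HC1 (y+1)%Z) (Hpos 0 _ (Rle_refl 0))) as [d1 [Hd1 N1]].
  destruct (near0 _ _ (HC1 y) (Hpos 0 _ (Rle_refl 0))) as [d0 [Hd0 N0]].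
  destruct (near0 _ _ (HC1 (y-1)%Z) (Hpos 0 _ (Rle_refl 0))) as [dm [Hdm Nm]].
  set (K := - ln (u 0 (y+1)%Z / 2) + 2 * ln (2 * u 0 y) - ln (u 0 (y-1)%Z / 2)).
  destruct (Hphi0 K) as [d2 [Hd2 P2]].
  set (d := Rmin (Rmin d1 d0) (Rmin dm d2)).
  assert (Hd : 0 < d) by (unfold d; repeat apply Rmin_pos; auto).
  apply (comparison h h' d Hd); auto.
  -
    intros s Hs.
    assert (P : forall k, 0 < u s k) by (intro; apply Hpos; lra).
    assert (D : forall k, derivable_pt_lim (fun r => ln (u r k)) s (du s k / u s k)).
    { intro k. apply dlog; auto. destruct (HC1 k) as [HH _]. apply HH; auto. }
    unfold h, h', sd.
    apply dlim_ext with (f := minus_fct (opp_fct (plus_fct (minus_fct (fun r => ln (u r (y+1)%Z)) (mult_real_fct 2 (fun r => ln (u r y)))) (fun r => ln (u r (y-1)%Z)))) (plus_fct phi (fct_cte eps))).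
    { intro r. unfold minus_fct, opp_fct, plus_fct, mult_real_fct, fct_cte, sfun. ring. }
    apply derivable_pt_lim_minus.
    + apply derivable_pt_lim_opp. apply derivable_pt_lim_plus; [apply derivable_pt_lim_minus|]; auto.
      apply derivable_pt_lim_scal; auto.
    + apply derivable_pt_lim_plus. apply Hphid; auto. apply derivable_pt_lim_const.
  -
    intros s [Hs1 Hs2].
    assert (s < d1 /\ s < d0 /\ s < dm /\ s < d2) as [e1 [e2 [e3 e4]]].
    { unfold d in Hs2. pose proof (Rmin_l (Rmin d1 d0) (Rmin dm d2)). pose proof (Rmin_r (Rmin d1 d0) (Rmin dm d2)).
      pose proof (Rmin_l d1 d0). pose proof (Rmin_r d1 d0). pose proof (Rmin_l dm d2). pose proof (Rmin_r dm d2). lra. }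
    specialize (N1 s (conj Hs1 e1)). specialize (N0 s (conj Hs1 e2)). specialize (Nm s (conj Hs1 e3)).
    specialize (P2 s (conj Hs1 e4)).
    assert (Q1 := Hpos 0 (y+1)%Z (Rle_refl 0)). assert (Q0 := Hpos 0 y (Rle_refl 0)). assert (Qm := Hpos 0 (y-1)%Z (Rle_refl 0)).
    assert (L1 : ln (u 0 (y+1)%Z / 2) < ln (u s (y+1)%Z)) by (apply ln_increasing; lra).
    assert (L0 : ln (u s y) < ln (2 * u 0 y)) by (apply ln_increasing; [apply Hpos; lra|lra]).
    assert (Lm : ln (u 0 (y-1)%Z / 2) < ln (u s (y-1)%Z)) by (apply ln_increasing; lra).
    unfold h, sfun. unfold K in P2. lra.
  -
    intros s Hs Hh0.
    assert (P : forall k, 0 < u s k) by (intro; apply Hpos; lra).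
    destruct (Heq s Hs) as [E0 [E1 Em]].
    unfold h', sd. rewrite E0, E1, Em. unfold lap.
    replace (y + 1 - 1)%Z with y by ring. replace (y - 1 + 1)%Z with y by ring.
    specialize (Hn1 s Hs). specialize (Hn2 s Hs).
    set (u0 := u s y) in *. set (u1 := u s (y+1)%Z) in *. set (um := u s (y-1)%Z) in *.
    set (u2 := u s (y+1+1)%Z) in *. set (um2 := u s (y-1-1)%Z) in *.
    assert (H0 : 0 < u0) by apply P. assert (H1 : 0 < u1) by apply P. assert (Hm : 0 < um) by apply P.
    assert (H2 : 0 < u2) by apply P. assert (Hm2 : 0 < um2) by apply P.
    set (ph := phi s) in *. assert (Hph : 0 < ph) by (apply Hphipos; auto).
    set (w := exp (- ph / 2)). set (p := exp (eps / 2)).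
    assert (Hww : w * w = exp (- ph)) by (unfold w; rewrite <- exp_plus; f_equal; field).
    assert (Hpp : p * p = exp eps) by (unfold p; rewrite <- exp_plus; f_equal; field).
    assert (Hw : 0 < w < 1).
    { split. apply exp_pos. rewrite <- exp_0. apply exp_increasing. lra. }
    assert (Hp1 : 1 < p). { rewrite <- exp_0. apply exp_increasing. lra. }
    assert (Hab : (u1 / u0) * (um / u0) * (p * p) = w * w).
    { unfold h, sfun in Hh0. fold u0 u1 um ph in Hh0.
      assert (ln u1 - 2 * ln u0 + ln um = - ph - eps) by lra.
      pose proof (exp_comb u1 u0 um H1 H0 Hm) as X. rewrite H in X.
      rewrite Hpp, Hww. replace (- ph - eps) with (- ph + - eps) in X by ring.
      rewrite exp_plus, exp_Ropp with (x := eps) in X.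
      replace (u1 / u0 * (um / u0)) with (u1 * um / (u0 * u0)) by (field; lra).
      rewrite <- X. field. pose proof (exp_pos eps). lra. }
    assert (Hk := key (u1/u0) (um/u0) w p r0 ltac:(apply Rdiv_lt_0_compat; lra) ltac:(apply Rdiv_lt_0_compat; lra) Hw Hp1 Hr ltac:(lra) Hab).
    assert (HF : F57 ph = 2 * w * (/ (w * w) + w * w - 2)).
    { unfold F57, Ups. rewrite Hww. rewrite exp_Ropp. fold w.
      replace (- ph / 2) with (- ph / 2) by ring. unfold w. field. apply Rgt_not_eq, exp_pos. }
    rewrite HF.
    assert (B1 : u2 / u1 >= r0 * (w * w) * (u1 / u0)).
    { rewrite Hww. apply Rle_ge.
      apply Rmult_le_reg_r with (u1 * u0). nra.
      replace (u2 / u1 * (u1 * u0)) with (u2 * u0) by (field; lra).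
      replace (r0 * exp (- ph) * (u1 / u0) * (u1 * u0)) with (r0 * exp (- ph) * (u1 * u1)) by (field; lra). lra. }
    assert (B2 : um2 / um >= r0 * (w * w) * (um / u0)).
    { rewrite Hww. apply Rle_ge.
      apply Rmult_le_reg_r with (um * u0). nra.
      replace (um2 / um * (um * u0)) with (um2 * u0) by (field; lra).
      replace (r0 * exp (- ph) * (um / u0) * (um * u0)) with (r0 * exp (- ph) * (um * um)) by (field; lra). lra. }
    replace (- ((u2 - 2 * u1 + u0) / u1 - 2 * ((u1 - 2 * u0 + um) / u0) + (u0 - 2 * um + um2) / um))
      with (2 * (u1/u0) + 2 * (um/u0) - u2/u1 - / (u1/u0) - um2/um - / (um/u0)) by (field; lra).
    lra.
Qed.

Lemma nb_bound A B C z : 0 < A -> 0 < B -> 0 < C -> -(ln A - 2 * ln B + ln C) < z -> exp (- z) * (B * B) <= A * C.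
Proof.
  intros HA HB HC H.
  assert (X : exp (- z) < exp (ln A - 2 * ln B + ln C)) by (apply exp_increasing; lra).
  rewrite exp_comb in X by auto.
  apply Rlt_le. apply Rmult_lt_compat_r with (r := B * B) in X; [|nra].
  replace (A * C / (B * B) * (B * B)) with (A * C) in X by (field; lra). exact X.
Qed.

Lemma expineq (K : R) : 1 <= K -> exp (8 / (K + 1)) + exp (- (8 / K)) >= 2.
Proof.
  intros HK.
  assert (E : exp (8 / (K + 1)) = exp (4 / (K + 1)) * exp (4 / (K + 1))) by (rewrite <- exp_plus; f_equal; field; lra).
  pose proof (exp_ineq1_le (4 / (K + 1))) as A1.
  pose proof (exp_ineq1_le (- (8 / K))) as A2.
  assert (0 <= 4 / (K + 1)) by (apply Rlt_le, Rdiv_lt_0_compat; lra).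
  assert (A3 : exp (8 / (K + 1)) >= (1 + 4 / (K + 1)) * (1 + 4 / (K + 1))) by (rewrite E; apply Rle_ge, Rmult_le_compat; lra).
  assert (A4 : (1 + 4 / (K + 1)) * (1 + 4 / (K + 1)) - (1 + 8 / K) = 8 * (K - 1) / (K * ((K + 1) * (K + 1)))) by (field; lra).
  assert (0 <= 8 * (K - 1) / (K * ((K + 1) * (K + 1)))).
  { apply Rmult_le_pos. lra. apply Rlt_le, Rinv_0_lt_compat. apply Rmult_lt_0_compat; nra. }
  lra.
Qed.

Lemma levels (phi : R -> R) (Hphi : relaxation_function F57 phi) (u du : R -> Z -> R)
  (Hpos : forall t x, 0 <= t -> 0 < u t x)
  (HC1 : forall x, C1_nonneg (fun t => u t x) (fun t => du t x)) (x0 : Z) (r : nat)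
  (Heq : forall t x, 0 <= t -> in_ball x0 (2 * r) x -> du t x = lap (u t) x) :
  forall j, (1 <= j)%nat -> (j <= r)%nat -> forall t y, 0 < t -> in_ball x0 (2 * r - j) y ->
    sfun u t y < phi t + 8 / INR j.
Proof.
  induction j as [|j IH]; intros Hj1 Hjr t y Ht Hy; [lia|].
  assert (HE : forall t, 0 < t -> du t y = lap (u t) y /\ du t (y+1)%Z = lap (u t) (y+1)%Z /\ du t (y-1)%Z = lap (u t) (y-1)%Z).
  { intros s Hs. unfold in_ball in *. repeat split; apply Heq; try lra; lia. }
  destruct j as [|j].
  -
    simpl INR. replace (8 / 1) with 8 by field.
    apply (core phi Hphi u du Hpos HC1 y HE 8 0); auto; try lra.
    + pose proof (exp_ineq1_le 8). lra.
    + intros s Hs. rewrite !Rmult_0_l. apply Rlt_le, Rmult_lt_0_compat; apply Hpos; lra.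
    + intros s Hs. rewrite !Rmult_0_l. apply Rlt_le, Rmult_lt_0_compat; apply Hpos; lra.
  - assert (IH' := IH ltac:(lia) ltac:(lia)).
    assert (HK : 1 <= INR (S j)) by (rewrite S_INR; pose proof (pos_INR j); lra).
    assert (Hpos8 : 0 < 8 / INR (S j)) by (apply Rdiv_lt_0_compat; lra).
    apply (core phi Hphi u du Hpos HC1 y HE (8 / INR (S (S j))) (exp (- (8 / INR (S j))))); auto.
    + apply Rdiv_lt_0_compat. lra. rewrite S_INR. lra.
    + split. apply Rlt_le, exp_pos. rewrite <- exp_0. apply Rlt_le, exp_increasing. lra.
    + rewrite (S_INR (S j)). apply expineq; auto.
    + intros s Hs.
      assert (B := IH' s (y+1)%Z Hs ltac:(unfold in_ball in *; lia)).
      unfold sfun in B. replace (y + 1 - 1)%Z with y in B by ring.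
      pose proof (nb_bound (u s (y+1+1)%Z) (u s (y+1)%Z) (u s y) _ ltac:(apply Hpos; lra) ltac:(apply Hpos; lra) ltac:(apply Hpos; lra) B) as X.
      replace (- (phi s + 8 / INR (S j))) with (- (8 / INR (S j)) + - phi s) in X by ring.
      rewrite exp_plus in X. exact X.
    + intros s Hs.
      assert (B := IH' s (y-1)%Z Hs ltac:(unfold in_ball in *; lia)).
      unfold sfun in B. replace (y - 1 + 1)%Z with y in B by ring.
      pose proof (nb_bound (u s y) (u s (y-1)%Z) (u s (y-1-1)%Z) _ ltac:(apply Hpos; lra) ltac:(apply Hpos; lra) ltac:(apply Hpos; lra) B) as X.
      replace (- (phi s + 8 / INR (S j))) with (- (8 / INR (S j)) + - phi s) in X by ring.
      rewrite exp_plus in X. rewrite Rmult_comm with (r1 := u s (y-1-1)%Z). exact X.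
Qed.

Theorem theorem5p7 :
  exists C : R, 0 < C /\
  forall (phi : R -> R), relaxation_function F57 phi ->
  forall (x0 : Z) (r : nat) (u du : R -> Z -> R),
    (1 <= r)%nat ->
    (forall t x, 0 <= t -> 0 < u t x) ->
    (forall x, C1_nonneg (fun t => u t x) (fun t => du t x)) ->
    (forall t x, 0 <= t -> in_ball x0 (2 * r) x -> du t x = lap (u t) x) ->
    forall t x, 0 < t -> in_ball x0 r x ->
      du t x / u t x >= Psi Ups (fun y => ln (u t y)) x - phi t - C / INR r.
Proof.
  exists 8. split; [lra|].
  intros phi Hphi x0 r u du Hr Hpos HC1 Heq t x Ht Hx.
  assert (S := levels phi Hphi u du Hpos HC1 x0 r Heq r Hr (le_n r) t x Ht ltac:(unfold in_ball in *; lia)).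
  rewrite (Heq t x ltac:(lra) ltac:(unfold in_ball in *; lia)).
  unfold sfun in S. unfold Psi, Ups, lap.
  assert (P : forall k, 0 < u t k) by (intro; apply Hpos; lra).
  assert (EL : forall a b, 0 < a -> 0 < b -> exp (ln a - ln b) = a / b).
  { intros a b Ha Hb. unfold Rminus. rewrite exp_plus, exp_Ropp, !exp_ln by auto. reflexivity. }
  rewrite !EL by apply P.
  replace ((u t (x + 1)%Z - 2 * u t x + u t (x - 1)%Z) / u t x) with
    (u t (x + 1)%Z / u t x - 1 + (u t (x - 1)%Z / u t x - 1)) by (field; specialize (P x); lra).
  lra.
Qed.
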